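(* Let $R=E[\eta(X)\eta(X)^\top]$ and $m=\sup_{x\in[0,1]^D}|\eta(x)|_2^2$ for the piecewise Legendre basis $\eta$ of the context, and assume $Q=0$, or $Q\in\mathbb{N}$ satisfies $$2\binom{D+Q}{D}e^{2Q}\le\frac{f_*}{\varpi(1/N)}.$$ Then $\lambda_{\min}(R)\ge f_*/2$, $\lambda_{\max}(R)\le\frac32f^*$, and $m\le N^De^{2Q}\binom{D+Q}{D}$.
   Context: $X$ is an $\mathbb{R}^D$-valued random variable with Lebesgue density $f\mathbf 1_{[0,1]^D}$, where $f$ is continuous and strictly positive on $[0,1]^D$. Let $f_*=\inf_{[0,1]^D}f$, $f^*=\sup_{[0,1]^D}f$, $\varpi(h)=\sup\{|f(x)-f(z)|:x,z\in[0,1]^D,|x-z|_\infty\le h\}$ (if $\varpi(1/N)=0$ the displayed condition is considered satisfied). For $N\in\mathbb{N}$ and $\mathbf i\in\{0,\dots,N-1\}^D$ let $C_{\mathbf i}=\prod_d(i_d/N,(i_d+1)/N]$. $\mathcal{L}_q$ is the Legendre polynomial of degree $q$ normalized by $\mathcal{L}_q(1)=1$. For $\mathbf j\in\mathbb{N}_0^D$, $p_{\mathbf j,\mathbf i}(x)=N^{D/2}\prod_{d=1}^D\sqrt{2j_d+1}\,\mathcal{L}_{j_d}(2(Nx_d-i_d)-1)$. For fixed $Q\in\mathbb{N}_0$, the basis consists of the $K=N^D\binom{D+Q}{D}$ functions $\eta_{\mathbf i,\mathbf j}=p_{\mathbf j,\mathbf i}\mathbf 1_{C_{\mathbf i}}$,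 $\mathbf i\in\{0,\dots,N-1\}^D$, $|\mathbf j|_1\le Q$, arranged in some fixed order into the vector $\eta$. *)

(* Defs.v *)
From Stdlib Require Import Reals Lra List.
Import ListNotations.
Open Scope R_scope.

(* Points of R^D are functions nat -> R; only coordinates 0..D-1 matter,
   and points of the cube [0,1]^D have all other coordinates equal to 0. *)
Definition in_cube (D : nat) (x : nat -> R) : Prop :=
  (forall d, (d < D)%nat -> 0 <= x d <= 1) /\ (forall d, (D <= d)%nat -> x d = 0).

(* Legendre polynomials, normalized by L_q(1) = 1 (Bonnet recurrence). *)
Fixpoint legendre2 (n : nat) (t : R) : R * R :=
  (* returns (L_n t, L_{n+1} t) *)
  match n with
  | O => (1, t)
  | S k => let (a, b) := legendre2 k t in
           (b, ((2 * INR k + 3) * t * b - (INR k + 1) * a) / (INR k + 2))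
  end.
Definition legendre (n : nat) (t : R) : R := fst (legendre2 n t).

Fixpoint tuples (D M : nat) : list (list nat) :=
  match D with
  | O => [[]]
  | S D' => flat_map (fun k => map (cons k) (tuples D' M)) (seq 0 M)
  end.

Definition sumn_list (l : list nat) : nat := fold_right Nat.add 0%nat l.

Definition basis_idx (D N Q : nat) : list (list nat * list nat) :=
  list_prod (tuples D N) (filter (fun j => Nat.leb (sumn_list j) Q) (tuples D (S Q))).

Definition prodD (D : nat) (g : nat -> R) : R := fold_right Rmult 1 (map g (seq 0 D)).

Definition sumL {A : Type} (l : list A) (g : A -> R) : R :=
  fold_right Rplus 0 (map g l).

Definition ind_oc (a b t : R) : R :=
  if Rlt_dec a t then (if Rle_dec t b then 1 else 0) else 0.

Definition eta (D N : nat) (ij : list nat * list nat) (x : nat -> R) : R :=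
  let (i, j) := ij in
  sqrt (INR N ^ D) *
  prodD D (fun d =>
    sqrt (2 * INR (nth d j 0%nat) + 1) *
    legendre (nth d j 0%nat) (2 * (INR N * x d - INR (nth d i 0%nat)) - 1) *
    ind_oc (INR (nth d i 0%nat) / INR N) (INR (S (nth d i 0%nat)) / INR N) (x d)).

(* Riemann sum of F over [0,1]^D on the uniform grid with M^D cells,
   tags at the upper corners of the cells *)
Definition riemann_sum (D M : nat) (F : (nat -> R) -> R) : R :=
  (/ INR M) ^ D *
  sumL (tuples D M)
    (fun k => F (fun d => if Nat.ltb d D then INR (S (nth d k 0%nat)) / INR M else 0)).

(* I is the integral of F over [0,1]^D (as limit of Riemann sums) *)
Definition is_cube_integral (D : nat) (F : (nat -> R) -> R) (I : R) : Prop :=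
  Un_cv (fun M => riemann_sum D (S M) F) I.

Definition continuous_on_cube (D : nat) (f : (nat -> R) -> R) : Prop :=
  forall x, in_cube D x -> forall eps, eps > 0 -> exists delta, delta > 0 /\
    forall z, in_cube D z -> (forall d, (d < D)%nat -> Rabs (x d - z d) < delta) ->
      Rabs (f x - f z) < eps.

(* Main.v *)
Require Import Defs.
From Stdlib Require Import Reals List Lra Lia Factorial ZArith.
From Coquelicot Require Coquelicot.
Open Scope R_scope.

Lemma sumL_nil {A} (g : A -> R) : sumL nil g = 0.
Proof. reflexivity. Qed.
Lemma sumL_cons {A} (x : A) l g : sumL (x :: l) g = g x + sumL l g.
Proof. reflexivity. Qed.
Lemma sumL_app {A} (l1 l2 : list A) g : sumL (l1 ++ l2) g = sumL l1 g + sumL l2 g.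
Proof. induction l1; simpl app. rewrite sumL_nil; lra. rewrite !sumL_cons, IHl1; lra. Qed.
Lemma sumL_ext {A} (l : list A) g h : (forall x, In x l -> g x = h x) -> sumL l g = sumL l h.
Proof. induction l; intros H; [reflexivity|]. rewrite !sumL_cons, H, IHl; auto.
  intros; apply H; simpl; auto. simpl; auto. Qed.
Lemma sumL_le {A} (l : list A) g h : (forall x, In x l -> g x <= h x) -> sumL l g <= sumL l h.
Proof. induction l; intros H; [unfold sumL; simpl; lra|]. rewrite !sumL_cons.
  assert (g a <= h a) by (apply H; simpl; auto).
  assert (sumL l g <= sumL l h) by (apply IHl; intros; apply H; simpl; auto). lra. Qed.
Lemma sumL_plus {A} (l : list A) g h : sumL l (fun x => g x + h x) = sumL l g + sumL l h.
Proof. induction l; [unfold sumL; simpl; lra|]. rewrite !sumL_cons, IHl; lra. Qed.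
Lemma sumL_scal {A} (l : list A) c g : sumL l (fun x => c * g x) = c * sumL l g.
Proof. induction l; [unfold sumL; simpl; lra|]. rewrite !sumL_cons, IHl; lra. Qed.
Lemma sumL_zero {A} (l : list A) : sumL l (fun _ => 0) = 0.
Proof. induction l; [reflexivity|]. rewrite sumL_cons, IHl; lra. Qed.
Lemma sumL_const {A} (l : list A) c : sumL l (fun _ => c) = INR (length l) * c.
Proof. induction l; [unfold sumL; simpl; lra|]. rewrite sumL_cons, IHl. simpl length. rewrite S_INR. lra. Qed.
Lemma sumL_map {A B} (f : A -> B) l g : sumL (map f l) g = sumL l (fun x => g (f x)).
Proof. induction l; [reflexivity|]. simpl map. rewrite !sumL_cons, IHl; reflexivity. Qed.
Lemma sumL_flat_map {A B} (f : A -> list B) l g :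
  sumL (flat_map f l) g = sumL l (fun x => sumL (f x) g).
Proof. induction l; [reflexivity|]. simpl flat_map. rewrite sumL_app, sumL_cons, IHl; reflexivity. Qed.
Lemma sumL_list_prod {A B} (l1 : list A) (l2 : list B) g :
  sumL (list_prod l1 l2) g = sumL l1 (fun x => sumL l2 (fun y => g (x, y))).
Proof. induction l1; [reflexivity|]. simpl list_prod. rewrite sumL_app, sumL_cons, IHl1, sumL_map; reflexivity. Qed.
Lemma sumL_swap {A B} (l1 : list A) (l2 : list B) h :
  sumL l1 (fun x => sumL l2 (fun y => h x y)) = sumL l2 (fun y => sumL l1 (fun x => h x y)).
Proof. induction l1; simpl.
  - symmetry; apply sumL_zero.
  - change (sumL l2 (fun y => h a y) + sumL l1 (fun x => sumL l2 (fun y => h x y)) =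
      sumL l2 (fun y => sumL (a :: l1) (fun x => h x y))).
    rewrite IHl1, <- sumL_plus. apply sumL_ext; intros; rewrite sumL_cons; reflexivity. Qed.
Lemma sumL_nonneg {A} (l : list A) g : (forall x, In x l -> 0 <= g x) -> 0 <= sumL l g.
Proof. intros H; rewrite <- (sumL_zero l). apply sumL_le; auto. Qed.
Lemma sumL_cv {A} (l : list A) (u : A -> nat -> R) (L : A -> R) :
  (forall a, In a l -> Un_cv (u a) (L a)) ->
  Un_cv (fun n => sumL l (fun a => u a n)) (sumL l L).
Proof. induction l; intros H.
  - simpl. intros e He; exists 0%nat; intros; unfold R_dist; rewrite Rminus_diag, Rabs_R0; lra.
  - apply (CV_plus (fun n => u a n) (fun n => sumL l (fun a => u a n))).
    apply H; simpl; auto. apply IHl; intros; apply H; simpl; auto. Qed.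
Lemma sumL_seq (f : nat -> R) n : sumL (seq 0 (S n)) f = sum_f_R0 f n.
Proof. induction n. simpl; unfold sumL; simpl; lra.
  rewrite seq_S, sumL_app, IHn. simpl. unfold sumL; simpl. lra. Qed.

Lemma prodD_0 g : prodD 0 g = 1.
Proof. reflexivity. Qed.
Lemma prodD_map_S {A} (l : list nat) (g : nat -> A) : map g (map S l) = map (fun d => g (S d)) l.
Proof. rewrite map_map; reflexivity. Qed.
Lemma prodD_S D g : prodD (S D) g = g 0%nat * prodD D (fun d => g (S d)).
Proof. unfold prodD. simpl. f_equal. rewrite <- seq_shift, map_map. reflexivity. Qed.
Lemma prodD_ext D g h : (forall d, (d < D)%nat -> g d = h d) -> prodD D g = prodD D h.
Proof. revert g h; induction D; intros g h H; [reflexivity|].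
  rewrite !prodD_S, H by lia. f_equal. apply IHD; intros; apply H; lia. Qed.
Lemma prodD_mult D g h : prodD D (fun d => g d * h d) = prodD D g * prodD D h.
Proof. revert g h; induction D; intros g h; [simpl; unfold prodD; simpl; lra|].
  rewrite !prodD_S, IHD. ring. Qed.
Lemma prodD_const D c : prodD D (fun _ => c) = c ^ D.
Proof. induction D; [reflexivity|]. rewrite prodD_S, IHD; simpl; ring. Qed.
Lemma prodD_nonneg D g : (forall d, (d < D)%nat -> 0 <= g d) -> 0 <= prodD D g.
Proof. revert g; induction D; intros g H; [unfold prodD; simpl; lra|].
  rewrite prodD_S. apply Rmult_le_pos. apply H; lia. apply IHD; intros; apply H; lia. Qed.
Lemma prodD_le D g h : (forall d, (d < D)%nat -> 0 <= g d <= h d) -> prodD D g <= prodD D h.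
Proof. revert g h; induction D; intros g h H; [unfold prodD; simpl; lra|].
  rewrite !prodD_S. apply Rmult_le_compat. apply H; lia.
  apply prodD_nonneg; intros; apply H; lia. apply H; lia. apply IHD; intros; apply H; lia. Qed.
Lemma prodD_cv D (u : nat -> nat -> R) (L : nat -> R) :
  (forall d, (d < D)%nat -> Un_cv (u d) (L d)) ->
  Un_cv (fun n => prodD D (fun d => u d n)) (prodD D L).
Proof. revert u L; induction D; intros u L H.
  - intros e He; exists 0%nat; intros; unfold R_dist. rewrite !prodD_0, Rminus_diag, Rabs_R0; lra.
  - rewrite prodD_S. eapply Un_cv_ext with (fun n => u 0%nat n * prodD D (fun d => u (S d) n)).
    intros n; rewrite prodD_S; reflexivity.
    apply CV_mult. apply H; lia. apply (IHD (fun d => u (S d)) (fun d => L (S d))).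
    intros; apply H; lia. Qed.

Lemma tuples_S D M : tuples (S D) M = flat_map (fun k => map (cons k) (tuples D M)) (seq 0 M).
Proof. reflexivity. Qed.

Lemma sumL_tuples_prod D M (g : nat -> nat -> R) :
  sumL (tuples D M) (fun k => prodD D (fun d => g d (nth d k 0%nat))) =
  prodD D (fun d => sumL (seq 0 M) (g d)).
Proof. revert g; induction D; intros g.
  - simpl. unfold sumL; simpl. rewrite !prodD_0. lra.
  - rewrite tuples_S, sumL_flat_map, prodD_S.
    rewrite <- (IHD (fun d => g (S d))).
    rewrite Rmult_comm, <- sumL_scal.
    apply sumL_ext; intros k _.
    rewrite sumL_map, Rmult_comm, <- sumL_scal. apply sumL_ext; intros t _.
    rewrite prodD_S. reflexivity.
Qed.

Lemma tuples_spec D M k : In k (tuples D M) ->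
  length k = D /\ forall d, (d < D)%nat -> (nth d k 0 < M)%nat.
Proof. revert k; induction D; intros k Hk.
  - simpl in Hk. destruct Hk as [<-|[]]. split; [reflexivity| intros; lia].
  - rewrite tuples_S in Hk. apply in_flat_map in Hk as [a [Ha Hk]].
    apply in_map_iff in Hk as [t [<- Ht]]. apply in_seq in Ha.
    destruct (IHD t Ht) as [H1 H2]. split. simpl; lia.
    intros [|d] Hd; simpl. lia. apply H2; lia.
Qed.

Lemma NoDup_map_cons_gen {A B Z} (f : A -> B -> Z) (l : list A) (T : list B) :
  NoDup l -> NoDup T ->
  (forall a a' t t', f a t = f a' t' -> a = a' /\ t = t') ->
  NoDup (flat_map (fun k => map (f k) T) l).
Proof. intros Hl HT Hf. induction l as [|a l IH]; simpl. constructor.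
  inversion Hl; subst. apply NoDup_app.
  - clear IH H1 H2. induction T as [|t T IHT]; simpl; constructor.
    + intros Hin. apply in_map_iff in Hin as [t' [E Ht']].
      apply Hf in E as [_ ->]. inversion HT; auto.
    + apply IHT. inversion HT; auto.
  - apply IH; auto.
  - intros x Hx Hx'. apply in_map_iff in Hx as [t [<- _]].
    apply in_flat_map in Hx' as [a' [Ha' Hx']]. apply in_map_iff in Hx' as [t' [E _]].
    apply Hf in E as [-> _]. auto.
Qed.

Lemma NoDup_tuples D M : NoDup (tuples D M).
Proof. induction D. simpl; constructor; [auto|constructor].
  rewrite tuples_S. apply NoDup_map_cons_gen; auto. apply seq_NoDup.
  intros a a' t t' E; injection E; auto.
Qed.

Lemma list_prod_eq {A B} (l1 : list A) (l2 : list B) :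
  list_prod l1 l2 = flat_map (fun x => map (pair x) l2) l1.
Proof. induction l1; simpl; [reflexivity|]. rewrite IHl1; reflexivity. Qed.

Lemma NoDup_list_prod' {A B} (l1 : list A) (l2 : list B) :
  NoDup l1 -> NoDup l2 -> NoDup (list_prod l1 l2).
Proof. intros. rewrite list_prod_eq. apply NoDup_map_cons_gen; auto.
  intros a a' t t' E; injection E; auto. Qed.

Lemma sumL_filter {A} (p : A -> bool) l g :
  sumL (filter p l) g = sumL l (fun x => if p x then g x else 0).
Proof. induction l; [reflexivity|]. simpl filter. destruct (p a) eqn:E;
  rewrite ?sumL_cons, IHl, ?E; lra. Qed.

Lemma C_nn n : C n n = 1.
Proof. unfold C. rewrite Nat.sub_diag. simpl (Factorial.fact 0). rewrite Rmult_1_r.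
  field. apply INR_fact_neq_0. Qed.
Lemma C_n0 n : C n 0 = 1.
Proof. unfold C. rewrite Nat.sub_0_r. simpl (Factorial.fact 0). rewrite Rmult_1_l.
  field. apply INR_fact_neq_0. Qed.

Lemma hockey D s : sum_f_R0 (fun k => C (D + (s - k)) D) s = C (S D + s) (S D).
Proof. induction s.
  - simpl. rewrite Nat.add_0_r, C_nn, C_nn. reflexivity.
  - rewrite decomp_sum by lia. simpl pred.
    rewrite (sum_eq _ (fun k => C (D + (s - k)) D)) by (intros; f_equal).
    rewrite IHs. rewrite Nat.sub_0_r.
    replace (S D + s)%nat with (D + S s)%nat by lia.
    replace (S D + S s)%nat with (S (D + S s)) by lia.
    apply pascal. lia.
Qed.

Lemma count_tuples D M s : (s < M)%nat ->
  sumL (tuples D M) (fun j => if Nat.leb (sumn_list j) s then 1 else 0) = C (D + s) D.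
Proof. revert s; induction D; intros s Hs.
  - simpl. unfold sumL; simpl. rewrite C_n0. lra.
  - rewrite tuples_S, sumL_flat_map.
    rewrite (sumL_ext _ _ (fun k => if Nat.leb k s then C (D + (s - k)) D else 0)).
    2:{ intros k Hk. rewrite sumL_map. change (fun x => (if Nat.leb (sumn_list (k :: x)) s then 1 else 0)) with (fun x => (if Nat.leb (k + sumn_list x) s then 1 else 0)). destruct (Nat.leb_spec k s).
        - rewrite <- IHD by lia. apply sumL_ext; intros t _.
          destruct (Nat.leb_spec (k + sumn_list t) s), (Nat.leb_spec (sumn_list t) (s - k)); auto; lia.
        - transitivity (sumL (tuples D M) (fun _ => 0)); [|apply sumL_zero]. apply sumL_ext; intros t _.
          destruct (Nat.leb_spec (k + sumn_list t) s); [lia|reflexivity]. }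
    replace M with (S s + (M - S s))%nat by lia.
    rewrite seq_app, sumL_app.
    rewrite (sumL_ext (seq (0 + S s) _) _ (fun _ => 0)), sumL_zero, Rplus_0_r.
    2:{ intros k Hk. apply in_seq in Hk. destruct (Nat.leb_spec k s); auto; lia. }
    rewrite sumL_seq. rewrite (sum_eq _ (fun k => C (D + (s - k)) D)).
    2:{ intros i Hi. destruct (Nat.leb_spec i s); auto; lia. }
    rewrite hockey. f_equal; lia.
Qed.

Lemma leg0 t : legendre 0 t = 1.
Proof. reflexivity. Qed.
Lemma leg1 t : legendre 1 t = t.
Proof. reflexivity. Qed.
Lemma leg_rec n t : legendre (S (S n)) t =
  ((2 * INR n + 3) * t * legendre (S n) t - (INR n + 1) * legendre n t) / (INR n + 2).
Proof. unfold legendre. simpl. destruct (legendre2 n t) as [a b] eqn:E. simpl. reflexivity. Qed.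

Lemma leg_at1 n : legendre n 1 = 1 /\ legendre (S n) 1 = 1.
Proof. induction n. split; reflexivity. destruct IHn as [H1 H2]. split; auto.
  rewrite leg_rec, H1, H2. field. pose proof (pos_INR n). lra. Qed.

Lemma leg_energy n t : -1 <= t <= 1 ->
  (legendre n t - t * legendre (S n) t)^2 + (1 - t^2) * (legendre (S n) t)^2 <= 1 - t^2.
Proof. intros Ht. induction n.
  - rewrite leg0, leg1. nra.
  - set (a := legendre n t) in *. set (b := legendre (S n) t) in *.
    assert (Hc : legendre (S (S n)) t = ((2 * INR n + 3) * t * b - (INR n + 1) * a) / (INR n + 2))
      by apply leg_rec.
    rewrite Hc. 
    assert (Hm : 0 <= INR n) by apply pos_INR.
    assert (E : (b - t * (((2 * INR n + 3) * t * b - (INR n + 1) * a) / (INR n + 2)))^2 +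
      (1 - t^2) * (((2 * INR n + 3) * t * b - (INR n + 1) * a) / (INR n + 2))^2 =
      ((INR n + 1) / (INR n + 2))^2 * (t*b - a)^2 + (1 - t^2) * b^2).
    { field. lra. }
    rewrite E.
    assert (0 <= ((INR n + 1) / (INR n + 2))^2 <= 1).
    { split. apply pow2_ge_0. assert (0 <= (INR n + 1) / (INR n + 2) <= 1). split.
      apply Rmult_le_pos; [lra|left; apply Rinv_0_lt_compat; lra]. apply Rmult_le_reg_r with (INR n + 2). lra.
      unfold Rdiv; rewrite Rmult_assoc, Rinv_l by lra. lra. nra. }
    assert (0 <= (t*b-a)^2) by apply pow2_ge_0.
    assert ((t*b-a)^2 = (a - t*b)^2) by ring. nra.
Qed.

Lemma leg_bound n t : -1 < t <= 1 -> (legendre n t)^2 <= 1.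
Proof. intros Ht. destruct (Req_dec t 1) as [->|Hne].
  - destruct (leg_at1 n) as [-> _]. lra.
  - destruct n. rewrite leg0; lra.
    pose proof (leg_energy n t ltac:(lra)).
    assert (0 < 1 - t^2) by nra.
    assert (0 <= (legendre n t - t * legendre (S n) t)^2) by apply pow2_ge_0.
    assert ((1 - t^2) * (legendre (S n) t)^2 <= (1-t^2) * 1) by lra.
    apply Rmult_le_reg_l in H2; lra.
Qed.

Definition lc (n : nat) : R := INR (fact (2 * n)) / (2 ^ n * INR (fact n) ^ 2).

Lemma lc_S m : lc (S m) = (2 * INR m + 1) / (INR m + 1) * lc m.
Proof. unfold lc. replace (2 * S m)%nat with (S (S (2 * m))) by lia.
  rewrite !fact_simpl, !mult_INR. rewrite !S_INR, mult_INR. simpl (INR 2).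
  pose proof (INR_fact_neq_0 m). pose proof (INR_fact_neq_0 (2*m)). pose proof (pos_INR m).
  simpl pow. field. repeat split; try lra. apply pow_nonzero; lra.
Qed.

Lemma sum_extend (f : nat -> R) n m : (n <= m)%nat -> (forall k, (n < k)%nat -> f k = 0) ->
  sum_f_R0 f m = sum_f_R0 f n.
Proof. intros Hnm Hf. induction Hnm; auto. rewrite tech5, IHHnm, Hf by lia. lra. Qed.

Definition poly_rep (n : nat) (g : R -> R) (c : nat -> R) : Prop :=
  (forall k, (n < k)%nat -> c k = 0) /\ forall t, g t = sum_f_R0 (fun k => c k * t ^ k) n.

Definition shiftc (c : nat -> R) (k : nat) : R := match k with O => 0 | S k' => c k' end.

Lemma sum_shift (c : nat -> R) n t :
  sum_f_R0 (fun k => shiftc c k * t ^ k) (S n) = t * sum_f_R0 (fun k => c k * t ^ k) n.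
Proof. rewrite decomp_sum by lia. simpl pred. simpl shiftc. rewrite scal_sum.
  rewrite Rmult_0_l, Rplus_0_l. apply sum_eq; intros; simpl; ring. Qed.

Lemma leg_poly n : exists c c', poly_rep n (legendre n) c /\ c n = lc n /\
  poly_rep (S n) (legendre (S n)) c' /\ c' (S n) = lc (S n).
Proof. induction n.
  - exists (fun k => match k with O => 1 | _ => 0 end), (fun k => match k with 1%nat => 1 | _ => 0 end).
    split; [split|split; [|split; [split|]]].
    + intros [|k] Hk; [lia|reflexivity].
    + intros t; rewrite leg0; simpl; ring.
    + unfold lc; simpl; lra.
    + intros [|[|k]] Hk; try lia; reflexivity.
    + intros t; simpl; rewrite leg1; ring.
    + unfold lc; simpl; lra.
  - destruct IHn as [c [c' [[Hc1 Hc2] [Hcn [[Hc1' Hc2'] Hcn']]]]].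
    exists c', (fun k => ((2 * INR n + 3) * shiftc c' k - (INR n + 1) * c k) / (INR n + 2)).
    split; [split; auto|split; auto]. split; [split|].
    + intros k Hk. destruct k as [|k]; [lia|]. simpl shiftc. rewrite Hc1', Hc1 by lia. lra.
    + intros t. rewrite leg_rec, Hc2, Hc2'.
      rewrite <- (sum_extend (fun k => c k * t^k) n (S (S n))) by (lia || (intros; rewrite Hc1 by lia; ring)).
      symmetry.
      rewrite (sum_eq _ (fun k => (shiftc c' k * t^k) * ((2 * INR n + 3) / (INR n + 2)) - (c k * t^k) * ((INR n + 1) / (INR n + 2)))) by (intros; unfold Rdiv; ring).
      rewrite minus_sum, <- !scal_sum, sum_shift. field. pose proof (pos_INR n); lra.
    + simpl shiftc. rewrite Hc1 by lia. rewrite Hcn'. rewrite (lc_S (S n)). rewrite S_INR. field.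
      pose proof (pos_INR n); lra.
Qed.

Module CQ.
Import Coquelicot.Coquelicot.

Lemma ext_helper (f g : R -> R) : (forall x, f x = g x) -> forall x : R_UniformSpace, f x = g x.
Proof. auto. Qed.

Ltac Req := match goal with |- ?a = ?b => change (@eq R a b) end.

Lemma isR_scal (f : R -> R) a b k l : is_RInt f a b l -> is_RInt (fun y => k * f y) a b (k * l).
Proof. intros H. apply (@is_RInt_scal R_NormedModule f a b k l H). Qed.
Lemma isR_plus (f g : R -> R) a b l1 l2 : is_RInt f a b l1 -> is_RInt g a b l2 ->
  is_RInt (fun y => f y + g y) a b (l1 + l2).
Proof. intros H1 H2. apply (@is_RInt_plus R_NormedModule f g a b l1 l2 H1 H2). Qed.
Lemma isR_minus (f g : R -> R) a b l1 l2 : is_RInt f a b l1 -> is_RInt g a b l2 ->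
  is_RInt (fun y => f y - g y) a b (l1 - l2).
Proof. intros H1 H2. apply (@is_RInt_minus R_NormedModule f g a b l1 l2 H1 H2). Qed.
Lemma isR_ext (f g : R -> R) a b l : (forall x, Rmin a b < x < Rmax a b -> f x = g x) ->
  is_RInt f a b l -> is_RInt g a b l.
Proof. intros H1 H2. apply (@is_RInt_ext R_NormedModule f g a b l H1 H2). Qed.
Lemma isR_unique (f : R -> R) a b l : is_RInt f a b l -> RInt f a b = l.
Proof. intros H. apply (@is_RInt_unique R_CompleteNormedModule f a b l H). Qed.
Lemma isR_correct (f : R -> R) a b : ex_RInt f a b -> is_RInt f a b (RInt f a b).
Proof. intros H. apply (@RInt_correct R_CompleteNormedModule f a b H). Qed.
Lemma isR_ext_eq (f : R -> R) a b l l' : l = l' -> is_RInt f a b l -> is_RInt f a b l'.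
Proof. intros ->; auto. Qed.

Lemma cont_mult (f g : R -> R) x : continuous f x -> continuous g x -> continuous (fun t => f t * g t) x.
Proof. intros. apply (continuous_mult f g x); auto. Qed.
Lemma cont_plus (f g : R -> R) x : continuous f x -> continuous g x -> continuous (fun t => f t + g t) x.
Proof. intros. apply (continuous_plus f g x); auto. Qed.
Lemma cont_const (c x : R) : continuous (fun _ : R => c) x.
Proof. apply continuous_const. Qed.
Lemma cont_id (x : R) : continuous (fun t : R => t) x.
Proof. apply continuous_id. Qed.
Lemma cont_pow m x : continuous (fun t : R => t ^ m) x.
Proof. induction m. apply cont_const. simpl. apply cont_mult; auto. apply cont_id. Qed.

Lemma cont_leg n x : continuous (legendre n) x /\ continuous (legendre (S n)) x.
Proof. induction n.
  - split. apply (continuous_ext (fun _ => 1)); [intros; reflexivity| apply cont_const].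
    apply (continuous_ext (fun t => t)); [intros; reflexivity| apply cont_id].
  - destruct IHn as [H1 H2]. split; auto.
    apply (continuous_ext (fun t => ((2 * INR n + 3) * t * legendre (S n) t + (- (INR n + 1)) * legendre n t) * / (INR n + 2))).
    apply ext_helper. intros; rewrite leg_rec; unfold Rdiv; ring.
    apply cont_mult; [|apply cont_const]. apply cont_plus; apply cont_mult; auto.
    apply cont_mult; [apply cont_const|apply cont_id]. apply cont_const.
Qed.

Definition K (n m : nat) : R := RInt (fun t => t ^ m * legendre n t) (-1) 1.

Lemma ex_K n m : ex_RInt (fun t => t ^ m * legendre n t) (-1) 1.
Proof. apply (@ex_RInt_continuous R_CompleteNormedModule). intros; apply cont_mult. apply cont_pow. apply cont_leg. Qed.

Lemma is_K n m : is_RInt (fun t => t ^ m * legendre n t) (-1) 1 (K n m).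
Proof. apply isR_correct, ex_K. Qed.

Lemma K_rec n m : K (S (S n)) m = ((2 * INR n + 3) * K (S n) (S m) - (INR n + 1) * K n m) / (INR n + 2).
Proof. apply isR_unique.
  apply (isR_ext (fun t => / (INR n + 2) * ((2 * INR n + 3) * (t ^ (S m) * legendre (S n) t) - (INR n + 1) * (t ^ m * legendre n t)))).
  { intros x _. rewrite leg_rec. simpl. field. pose proof (pos_INR n); lra. }
  apply (isR_ext_eq _ _ _ (/ (INR n + 2) * ((2 * INR n + 3) * K (S n) (S m) - (INR n + 1) * K n m))).
  unfold Rdiv; apply Rmult_comm.
  apply isR_scal, isR_minus; apply isR_scal, is_K.
Qed.

Lemma K0 m : K 0 m = (1 - (-1) ^ (S m)) / INR (S m).
Proof. apply isR_unique.
  apply (isR_ext (fun t => t ^ m)). intros; rewrite leg0; ring.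
  apply (isR_ext_eq _ _ _ (1 ^ (S m) / INR (S m) - (-1) ^ (S m) / INR (S m))).
  { rewrite pow1. unfold Rdiv. rewrite Rmult_minus_distr_r. reflexivity. }
  apply (@is_RInt_derive R_CompleteNormedModule (fun t => t ^ (S m) / INR (S m))).
  - intros x _. auto_derive. auto. Req. destruct m; [field|]. field. pose proof (pos_INR (S m)); lra.
  - intros; apply cont_pow.
Qed.

Definition G (n k : nat) : R :=
  2 ^ (n + 1) * INR (fact (n + 2 * k)) * INR (fact (n + k)) / (INR (fact k) * INR (fact (2 * n + 2 * k + 1))).

Definition HK (n : nat) : Prop :=
  (forall k, K n (n + 2 * k) = G n k) /\ (forall k, K n (n + 2 * k + 1) = 0) /\
  (forall m, (m < n)%nat -> K n m = 0).

Ltac factpos := repeat match goal with |- context [INR (fact ?a)] =>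
  lazymatch goal with
  | H : INR (fact a) <> 0 |- _ => fail
  | _ => let H := fresh in assert (H := INR_fact_neq_0 a)
  end end.

Lemma HK0 : HK 0.
Proof. split; [|split].
  - intros k. rewrite Nat.add_0_l, K0, pow_1_odd. unfold G. rewrite !Nat.add_0_l.
    replace (2 * 0 + 2 * k + 1)%nat with (S (2 * k)) by lia.
    replace (2 * k + 1)%nat with (S (2 * k)) by lia.
    rewrite fact_simpl, mult_INR. factpos. pose proof (pos_INR (2*k)).
    rewrite S_INR. rewrite pow_1. field. split; auto. lra.
  - intros k. rewrite Nat.add_0_l, K0. replace (S (2 * k + 1)) with (2 * (S k))%nat by lia.
    rewrite pow_1_even. unfold Rdiv. rewrite Rminus_diag. apply Rmult_0_l.
  - intros; lia.
Qed.

Lemma K1 m : K 1 m = K 0 (S m).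
Proof. unfold K. apply (@RInt_ext R_CompleteNormedModule). intros; rewrite leg1, leg0. Req. simpl; ring. Qed.

Lemma fS a : INR (fact (S a)) = INR (S a) * INR (fact a).
Proof. rewrite fact_simpl, mult_INR. reflexivity. Qed.

Lemma fact_eq a b : a = b -> INR (fact a) = INR (fact b).
Proof. intros ->; reflexivity. Qed.

Ltac fin := factpos; rewrite ?S_INR; repeat match goal with |- context [INR ?a] =>
  lazymatch goal with
  | H : 0 <= INR a |- _ => fail
  | _ => let H := fresh in assert (H := pos_INR a)
  end end.

Lemma HK1 : HK 1.
Proof. destruct HK0 as [A [B _]]. split; [|split].
  - intros k. rewrite K1. replace (S (1 + 2 * k)) with (0 + 2 * S k)%nat by lia. rewrite A.
    unfold G.
    rewrite (fact_eq (0 + 2 * S k) (S (S (2 * k)))), (fact_eq (0 + S k) (S k)),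
      (fact_eq (2*0+2*S k+1) (S (S (S (2*k))))), (fact_eq (1+2*k) (S (2*k))),
      (fact_eq (1+k) (S k)), (fact_eq (2*1+2*k+1) (S (S (S (2*k))))) by lia.
    rewrite !fS. replace (0+1)%nat with 1%nat by lia. replace (1+1)%nat with 2%nat by lia.
    fin. rewrite mult_INR. simpl (INR 2). field. repeat split; try lra; auto.
  - intros k. rewrite K1. replace (S (1 + 2 * k + 1)) with (0 + 2 * S k + 1)%nat by lia. auto.
  - intros m Hm. assert (m = 0)%nat by lia. subst. rewrite K1. apply (B 0%nat).
Qed.

Lemma G_id1 n k : (2 * INR n + 3) * G (S n) (S k) - (INR n + 1) * G n (S k) = (INR n + 2) * G (S (S n)) k.
Proof. unfold G.
  rewrite (fact_eq (S n + 2 * S k) (S (n + 2 * k + 2))), (fact_eq (S n + S k) (S (n + k + 1))),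
    (fact_eq (2 * S n + 2 * S k + 1) (S (S (2 * n + 2 * k + 3)))),
    (fact_eq (n + 2 * S k) (n + 2 * k + 2)), (fact_eq (n + S k) (n + k + 1)),
    (fact_eq (2 * n + 2 * S k + 1) (2 * n + 2 * k + 3)),
    (fact_eq (S (S n) + 2 * k) (n + 2 * k + 2)), (fact_eq (S (S n) + k) (S (n + k + 1))),
    (fact_eq (2 * S (S n) + 2 * k + 1) (S (S (2 * n + 2 * k + 3)))) by lia.
  rewrite !fS. rewrite !pow_add. simpl pow. factpos. rewrite !S_INR, !plus_INR, !mult_INR.
  pose proof (pos_INR n). pose proof (pos_INR k). simpl (INR 2). simpl (INR 3).
  rewrite ?INR_1. field. repeat split; auto; lra.
Qed.

Lemma G_id2 n : (2 * INR n + 3) * G (S n) 0 = (INR n + 1) * G n 0.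
Proof. unfold G.
  rewrite (fact_eq (S n + 2 * 0) (S n)), (fact_eq (S n + 0) (S n)),
    (fact_eq (2 * S n + 2 * 0 + 1) (S (S (2 * n + 1)))),
    (fact_eq (n + 2 * 0) n), (fact_eq (n + 0) n), (fact_eq (2 * n + 2 * 0 + 1) (2 * n + 1)) by lia.
  rewrite !fS. rewrite !pow_add. simpl pow. factpos. rewrite !S_INR, !plus_INR, !mult_INR.
  pose proof (pos_INR n). simpl (INR 2). simpl (INR 1).
  field. repeat split; auto; lra.
Qed.

Lemma HK_step n : HK n -> HK (S n) -> HK (S (S n)).
Proof. intros [A0 [B0 C0]] [A1 [B1 C1]]. pose proof (pos_INR n). split; [|split].
  - intros k. rewrite K_rec.
    replace (S (S (S n) + 2 * k)) with (S n + 2 * S k)%nat by lia. rewrite A1.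
    replace (S (S n) + 2 * k)%nat with (n + 2 * S k)%nat by lia. rewrite A0.
    rewrite G_id1. field. lra.
  - intros k. rewrite K_rec.
    replace (S (S (S n) + 2 * k + 1)) with (S n + 2 * S k + 1)%nat by lia. rewrite B1.
    replace (S (S n) + 2 * k + 1)%nat with (n + 2 * S k + 1)%nat by lia. rewrite B0.
    unfold Rdiv. ring.
  - intros m Hm. rewrite K_rec.
    destruct (Nat.eq_dec m (S n)) as [->|H1].
    + replace (K (S n) (S (S n))) with (K (S n) (S n + 2 * 0 + 1)) by (f_equal; lia). rewrite B1.
      replace (K n (S n)) with (K n (n + 2 * 0 + 1)) by (f_equal; lia). rewrite B0. unfold Rdiv; ring.
    + destruct (Nat.eq_dec m n) as [->|H2].
      * replace (K (S n) (S n)) with (K (S n) (S n + 2 * 0)) by (f_equal; lia). rewrite A1.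
        replace (K n n) with (K n (n + 2 * 0)) by (f_equal; lia). rewrite A0.
        rewrite G_id2. field. lra.
      * rewrite C1, C0 by lia. unfold Rdiv; ring.
Qed.

Lemma HK_all n : HK n /\ HK (S n).
Proof. induction n. split; [apply HK0|apply HK1]. destruct IHn; split; auto. apply HK_step; auto. Qed.

Lemma leg_int_poly n d c : is_RInt (fun t => legendre n t * sum_f_R0 (fun k => c k * t^k) d) (-1) 1
  (sum_f_R0 (fun k => c k * K n k) d).
Proof. induction d.
  - simpl. apply (isR_ext (fun t => c 0%nat * (t ^ 0 * legendre n t))). intros; simpl; ring.
    apply isR_scal, is_K.
  - apply (isR_ext (fun t => legendre n t * sum_f_R0 (fun k => c k * t^k) d + c (S d) * (t ^ (S d) * legendre n t))).
    intros; rewrite tech5; ring.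
    rewrite tech5. apply isR_plus; auto. apply isR_scal, is_K.
Qed.

Lemma lcG n : lc n * G n 0 = 2 / (2 * INR n + 1).
Proof. unfold lc, G.
  rewrite (fact_eq (n + 2 * 0) n), (fact_eq (n + 0) n), (fact_eq (2 * n + 2 * 0 + 1) (S (2 * n))) by lia.
  rewrite fS. rewrite pow_add.
  factpos. rewrite S_INR, mult_INR. simpl (fact 0). simpl (INR 1). simpl (INR 2).
  pose proof (pos_INR n). field. repeat split; auto; try lra. apply pow_nonzero; lra.
Qed.

Lemma leg_orth_lt n m : (m < n)%nat -> is_RInt (fun t => legendre n t * legendre m t) (-1) 1 0.
Proof. intros Hmn. destruct (leg_poly m) as [c [_ [[Hc1 Hc2] _]]].
  apply (isR_ext (fun t => legendre n t * sum_f_R0 (fun k => c k * t^k) m)).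
  intros; rewrite Hc2; reflexivity.
  apply (isR_ext_eq _ _ _ (sum_f_R0 (fun k => c k * K n k) m)).
  2: apply leg_int_poly.
  destruct (HK_all n) as [[_ [_ HC]] _].
  rewrite (sum_eq _ (fun _ => 0)). rewrite sum_cte. Req. ring.
  intros i Hi. rewrite HC by lia. ring.
Qed.

Lemma leg_norm n : is_RInt (fun t => legendre n t * legendre n t) (-1) 1 (2 / (2 * INR n + 1)).
Proof. destruct (leg_poly n) as [c [_ [[Hc1 Hc2] [Hcn _]]]].
  apply (isR_ext (fun t => legendre n t * sum_f_R0 (fun k => c k * t^k) n)).
  intros; rewrite Hc2; reflexivity.
  apply (isR_ext_eq _ _ _ (sum_f_R0 (fun k => c k * K n k) n)).
  2: apply leg_int_poly.
  destruct (HK_all n) as [[HA [_ HC]] _].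
  rewrite <- lcG, <- Hcn. replace (G n 0) with (K n n) by (rewrite <- HA; f_equal; lia).
  destruct n. simpl; reflexivity.
  rewrite tech5. rewrite (sum_eq _ (fun _ => 0)). rewrite sum_cte. Req. ring.
  intros i Hi. rewrite HC by lia. ring.
Qed.

Lemma leg_orth n m : is_RInt (fun t => legendre n t * legendre m t) (-1) 1
  (if Nat.eq_dec n m then 2 / (2 * INR n + 1) else 0).
Proof. destruct (Nat.eq_dec n m) as [<-|Hne]. apply leg_norm.
  destruct (Nat.lt_total n m) as [H|[H|H]]; try lia.
  - apply (isR_ext (fun t => legendre m t * legendre n t)). intros; ring. apply leg_orth_lt; auto.
  - apply leg_orth_lt; auto.
Qed.

Lemma iota_shift s n : seq.iota (S s) n = map S (seq.iota s n).
Proof. revert s; induction n; intros s; simpl; [reflexivity|]. rewrite IHn. reflexivity. Qed.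

Lemma mkseq_S (g : nat -> R) m : seq.mkseq g (S m) = g 0%nat :: seq.mkseq (fun i => g (S i)) m.
Proof. unfold seq.mkseq. simpl. rewrite iota_shift. f_equal.
  change (seq.map g (map S (seq.iota 0 m)) = seq.map (fun i => g (S i)) (seq.iota 0 m)).
  rewrite <- (map_map S g). reflexivity. Qed.

Lemma RS_mkseq (h : R -> R) (g : nat -> R) n :
  Riemann_sum h (SF_seq_f2 (fun _ y => y) (seq.mkseq g (S (S n)))) =
  sumL (seq 0 (S n)) (fun i => (g (S i) - g i) * h (g (S i))).
Proof. revert g; induction n; intros g.
  - rewrite mkseq_S. rewrite SF_cons_f2 by (simpl; lia). rewrite Riemann_sum_cons.
    rewrite mkseq_S. simpl. unfold sumL; simpl.
    unfold plus, scal; simpl. unfold mult; simpl. unfold Riemann_sum; simpl.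
    change (@zero R_AbelianGroup) with 0. reflexivity.
  - rewrite mkseq_S. rewrite SF_cons_f2 by (simpl; lia). rewrite Riemann_sum_cons.
    rewrite IHn.
    replace (seq 0 (S (S n))) with (0%nat :: seq 1 (S n)) by reflexivity.
    rewrite sumL_cons, <- seq_shift, sumL_map.
    rewrite (mkseq_S (fun i => g (S i))). simpl. unfold plus, scal; simpl. unfold mult; simpl.
    reflexivity.
Qed.

Lemma RS_unif (h : R -> R) M :
  Riemann_sum h (SF_seq_f2 (fun _ y => y) (unif_part 0 1 M)) =
  / INR (S M) * sumL (seq 0 (S M)) (fun k => h (INR (S k) / INR (S M))).
Proof. unfold unif_part. rewrite RS_mkseq. rewrite <- sumL_scal. apply sumL_ext; intros k _.
  rewrite !S_INR. pose proof (pos_INR M). pose proof (pos_INR k).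
  replace (0 + (INR k + 1) * (1 - 0) / (INR M + 1)) with ((INR k + 1) / (INR M + 1)) by (field; lra).
  field. lra.
Qed.

Lemma RS_lim (h : R -> R) l : is_RInt h 0 1 l ->
  Un_cv (fun M => / INR (S M) * sumL (seq 0 (S M)) (fun k => h (INR (S k) / INR (S M)))) l.
Proof. intros H eps Heps.
  assert (Hb : locally l (ball l (mkposreal eps Heps))) by (apply locally_ball).
  specialize (H _ Hb). destruct H as [delta Hd].
  destruct (archimed (/ delta)) as [Ha _].
  destruct (INR_IZR_INZ (Z.to_nat (up (/ delta)))) as [].
  exists (Z.to_nat (up (/ delta))). intros M HM.
  pose proof (Riemann_fine_unif_part (fun _ y => y) 0 1 M ltac:(intros; lra) ltac:(lra)) as [S1 [S2 [S3 S4]]].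
  assert (Hdpos := cond_pos delta).
  assert (HM' : / delta < INR M + 1).
  { apply Rlt_le_trans with (IZR (up (/ delta))). auto.
    assert (IZR (up (/ delta)) <= INR M).
    { destruct (Z_le_gt_dec 0 (up (/ delta))).
      - rewrite <- (Z2Nat.id _ l0), <- INR_IZR_INZ. apply le_INR; lia.
      - pose proof (pos_INR M). assert (Hz : (up (/ delta) < 0)%Z) by lia. apply IZR_lt in Hz. simpl in Hz. lra. }
    lra. }
  specialize (Hd (SF_seq_f2 (fun _ y => y) (unif_part 0 1 M))).
  assert (Hstep : seq_step (SF_lx (SF_seq_f2 (fun _ y => y) (unif_part 0 1 M))) < delta).
  { eapply Rle_lt_trans; [apply S1|]. replace (1 - 0) with 1 by ring.
    pose proof (pos_INR M).
    apply Rmult_lt_reg_r with (INR M + 1). lra. unfold Rdiv. rewrite Rmult_1_l, Rinv_l by lra.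
    apply Rmult_lt_reg_l with (/ delta). apply Rinv_0_lt_compat; lra.
    rewrite <- Rmult_assoc, Rinv_l by lra. lra. }
  specialize (Hd Hstep). 
  assert (Hp : pointed_subdiv (SF_seq_f2 (fun _ y => y) (unif_part 0 1 M)) /\
     SF_h (SF_seq_f2 (fun _ y => y) (unif_part 0 1 M)) = Rmin 0 1 /\
     seq.last (SF_h (SF_seq_f2 (fun _ y => y) (unif_part 0 1 M))) (SF_lx (SF_seq_f2 (fun _ y => y) (unif_part 0 1 M))) = Rmax 0 1).
  { rewrite Rmin_left, Rmax_right by lra. auto. }
  specialize (Hd Hp). simpl in Hd.
  rewrite RS_unif in Hd. unfold ball in Hd; simpl in Hd. unfold AbsRing_ball in Hd.
  unfold R_dist. replace (sign (1 - 0)) with 1 in Hd.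
  2:{ symmetry; apply sign_eq_1; lra. }
  unfold abs, minus, plus, opp, scal in Hd; simpl in Hd. unfold mult in Hd; simpl in Hd.
  rewrite Rmult_1_l in Hd. auto.
Qed.

Lemma isR_zero (f : R -> R) a b : (forall x, Rmin a b < x < Rmax a b -> f x = 0) -> is_RInt f a b 0.
Proof. intros H. apply (isR_ext (fun _ => 0)). intros; symmetry; auto.
  apply (isR_ext_eq _ _ _ (scal (b - a) 0)). unfold scal; simpl; unfold mult; simpl. Req. ring.
  apply (@is_RInt_const R_NormedModule). Qed.

Lemma isR_chasles (f : R -> R) a b c l1 l2 : is_RInt f a b l1 -> is_RInt f b c l2 -> is_RInt f a c (l1 + l2).
Proof. intros H1 H2. apply (@is_RInt_Chasles R_NormedModule f a b c l1 l2 H1 H2). Qed.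

Lemma cell_int (phi : R -> R) I N i : (0 < N)%nat -> (i < N)%nat -> is_RInt phi (-1) 1 I ->
  is_RInt (fun x => INR N * phi (2 * (INR N * x - INR i) - 1) *
     ind_oc (INR i / INR N) (INR (S i) / INR N) x) 0 1 (I / 2).
Proof. intros HN Hi HI.
  assert (HNp : 0 < INR N) by (apply lt_0_INR; lia).
  assert (Hi' : INR (S i) <= INR N) by (apply le_INR; lia).
  assert (Hi0 : 0 <= INR i) by apply pos_INR. rewrite S_INR in Hi'.
  set (a := INR i / INR N). set (b := INR (S i) / INR N).
  assert (Ha : 0 <= a) by (unfold a; apply Rmult_le_pos; [lra|left; apply Rinv_0_lt_compat; lra]).
  assert (Hab : a < b) by (unfold a, b; rewrite S_INR; apply Rmult_lt_compat_r; [apply Rinv_0_lt_compat|]; lra).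
  assert (Hb : b <= 1) by (unfold b; rewrite S_INR; apply Rmult_le_reg_r with (INR N); auto;
     unfold Rdiv; rewrite Rmult_assoc, Rinv_l; lra).
  replace (I / 2) with (0 + (I / 2 + 0)) by ring.
  apply isR_chasles with a. 
  { apply isR_zero. intros x Hx. rewrite Rmin_left, Rmax_right in Hx by lra.
    unfold ind_oc. destruct (Rlt_dec a x); [lra|ring]. }
  apply isR_chasles with b.
  2:{ apply isR_zero. intros x Hx. rewrite Rmin_left, Rmax_right in Hx by lra.
    unfold ind_oc. destruct (Rlt_dec a x); [|ring]. destruct (Rle_dec x b); [lra|ring]. }
  apply (isR_ext (fun x => / 2 * scal (2 * INR N) (phi ((2 * INR N) * x + (- (2 * INR i + 1)))))).
  { intros x Hx. rewrite Rmin_left, Rmax_right in Hx by lra.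
    unfold ind_oc. destruct (Rlt_dec a x); [|lra]. destruct (Rle_dec x b); [|lra].
    unfold scal; simpl; unfold mult; simpl.
    replace (2 * INR N * x + - (2 * INR i + 1)) with (2 * (INR N * x - INR i) - 1) by ring.
    field. }
  replace (I / 2) with (/ 2 * I) by (unfold Rdiv; ring).
  apply isR_scal. apply (@is_RInt_comp_lin R_NormedModule).
  replace (2 * INR N * a + - (2 * INR i + 1)) with (-1). 
  replace (2 * INR N * b + - (2 * INR i + 1)) with 1. auto.
  unfold b; rewrite S_INR; field; lra.
  unfold a; field; lra.
Qed.

Definition ef (N i j : nat) (x : R) : R :=
  sqrt (2 * INR j + 1) * legendre j (2 * (INR N * x - INR i) - 1) *
  ind_oc (INR i / INR N) (INR (S i) / INR N) x.

Lemma ind_sq a b x : ind_oc a b x * ind_oc a b x = ind_oc a b x.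
Proof. unfold ind_oc. destruct (Rlt_dec a x); [destruct (Rle_dec x b)|]; ring. Qed.

Lemma ind_disj N i i' x : (0 < N)%nat -> i <> i' ->
  ind_oc (INR i / INR N) (INR (S i) / INR N) x * ind_oc (INR i' / INR N) (INR (S i') / INR N) x = 0.
Proof. intros HN Hne. assert (HNp : 0 < INR N) by (apply lt_0_INR; lia).
  assert (forall p q, (p < q)%nat -> INR (S p) / INR N <= INR q / INR N).
  { intros p q Hpq. apply Rmult_le_compat_r. left; apply Rinv_0_lt_compat; lra. apply le_INR; lia. }
  unfold ind_oc.
  destruct (Rlt_dec (INR i / INR N) x); [destruct (Rle_dec x (INR (S i) / INR N))|]; try ring;
  destruct (Rlt_dec (INR i' / INR N) x); [destruct (Rle_dec x (INR (S i') / INR N))|]; try ring.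
  destruct (Nat.lt_total i i') as [H1|[H1|H1]]; [|lia|].
  - specialize (H i i' H1). lra.
  - specialize (H i' i H1). lra.
Qed.

Lemma ef_lim N i i' j j' : (0 < N)%nat -> (i < N)%nat -> (i' < N)%nat ->
  Un_cv (fun M => / INR (S M) * sumL (seq 0 (S M))
     (fun k => INR N * (ef N i j (INR (S k) / INR (S M)) * ef N i' j' (INR (S k) / INR (S M)))))
   (if (Nat.eqb i i' && Nat.eqb j j')%bool then 1 else 0).
Proof. intros HN Hi Hi'. destruct (Nat.eq_dec i i') as [<-|Hne].
  - rewrite Nat.eqb_refl. simpl andb.
    set (phi := fun t => (sqrt (2 * INR j + 1) * sqrt (2 * INR j' + 1)) * (legendre j t * legendre j' t)).
    set (I := (sqrt (2 * INR j + 1) * sqrt (2 * INR j' + 1)) * (if Nat.eq_dec j j' then 2 / (2 * INR j + 1) else 0)).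
    assert (HI : is_RInt phi (-1) 1 I) by (apply isR_scal, leg_orth).
    pose proof (RS_lim _ _ (cell_int phi I N i HN Hi HI)) as HL.
    replace (if Nat.eqb j j' then 1 else 0) with (I / 2).
    2:{ unfold I. destruct (Nat.eq_dec j j') as [<-|Hj].
        - rewrite Nat.eqb_refl. pose proof (pos_INR j).
          rewrite sqrt_sqrt by lra. field. lra.
        - apply Nat.eqb_neq in Hj. rewrite Hj. field. }
    eapply Un_cv_ext; [|exact HL]. intros M. cbv beta. f_equal. apply sumL_ext; intros k _.
    unfold ef, phi. cbv beta. set (x := INR (S k) / INR (S M)).
    transitivity (INR N * sqrt (2 * INR j + 1) * sqrt (2 * INR j' + 1) *
       legendre j (2 * (INR N * x - INR i) - 1) * legendre j' (2 * (INR N * x - INR i) - 1) *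
       (ind_oc (INR i / INR N) (INR (S i) / INR N) x * ind_oc (INR i / INR N) (INR (S i) / INR N) x)).
    rewrite ind_sq. ring. ring.
  - replace (if (Nat.eqb i i' && Nat.eqb j j')%bool then 1 else 0) with 0.
    2:{ apply Nat.eqb_neq in Hne. rewrite Hne. reflexivity. }
    intros eps Heps. exists 0%nat. intros M _. unfold R_dist.
    rewrite (sumL_ext _ _ (fun _ => 0)). rewrite sumL_zero. rewrite Rmult_0_r, Rminus_diag, Rabs_R0. lra.
    intros k _. unfold ef.
    transitivity (INR N * sqrt (2 * INR j + 1) * sqrt (2 * INR j' + 1) *
       legendre j (2 * (INR N * (INR (S k) / INR (S M)) - INR i) - 1) *
       legendre j' (2 * (INR N * (INR (S k) / INR (S M)) - INR i') - 1) *
       (ind_oc (INR i / INR N) (INR (S i) / INR N) (INR (S k) / INR (S M)) *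
        ind_oc (INR i' / INR N) (INR (S i') / INR N) (INR (S k) / INR (S M)))). ring.
    rewrite ind_disj by auto. ring.
Qed.

End CQ.
Import CQ.

Definition idx_eq_dec (a b : list nat * list nat) : {a = b} + {a <> b}.
Proof. repeat decide equality. Defined.

Definition tag (D M : nat) (k : list nat) : nat -> R :=
  fun d => if Nat.ltb d D then INR (S (nth d k 0%nat)) / INR M else 0.

Lemma RS_def D M F : riemann_sum D M F = (/ INR M) ^ D * sumL (tuples D M) (fun k => F (tag D M k)).
Proof. reflexivity. Qed.

Lemma RS_ext D M F G : (forall x, F x = G x) -> riemann_sum D M F = riemann_sum D M G.
Proof. intros H. rewrite !RS_def. f_equal. apply sumL_ext; auto. Qed.

Lemma RS_lin {A} D M (l : list A) (c : A -> R) (F : A -> (nat -> R) -> R) :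
  riemann_sum D M (fun x => sumL l (fun a => c a * F a x)) = sumL l (fun a => c a * riemann_sum D M (F a)).
Proof. rewrite RS_def. rewrite sumL_swap. rewrite <- sumL_scal. apply sumL_ext; intros a _.
  rewrite RS_def, <- !sumL_scal. apply sumL_ext; intros; ring. Qed.

Lemma RS_mono D M F G : (forall k, In k (tuples D (S M)) -> F (tag D (S M) k) <= G (tag D (S M) k)) ->
  riemann_sum D (S M) F <= riemann_sum D (S M) G.
Proof. intros H. rewrite !RS_def. apply Rmult_le_compat_l.
  apply pow_le. left; apply Rinv_0_lt_compat, lt_0_INR; lia.
  apply sumL_le; auto. Qed.

Lemma tag_cube D M k : In k (tuples D (S M)) -> in_cube D (tag D (S M) k).
Proof. intros Hk. destruct (tuples_spec _ _ _ Hk) as [Hl Hn]. split.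
  - intros d Hd. unfold tag. destruct (Nat.ltb_spec d D); [|lia].
    specialize (Hn d Hd). assert (0 < INR (S M)) by (apply lt_0_INR; lia).
    assert (INR (S (nth d k 0%nat)) <= INR (S M)) by (apply le_INR; lia).
    pose proof (pos_INR (S (nth d k 0%nat))). split.
    apply Rmult_le_pos; [lra|left; apply Rinv_0_lt_compat; lra].
    apply Rmult_le_reg_r with (INR (S M)); auto. unfold Rdiv; rewrite Rmult_assoc, Rinv_l; lra.
  - intros d Hd. unfold tag. destruct (Nat.ltb_spec d D); [lia|reflexivity].
Qed.

Lemma eta_ef D N a x : eta D N a x =
  sqrt (INR N ^ D) * prodD D (fun d => ef N (nth d (fst a) 0%nat) (nth d (snd a) 0%nat) (x d)).
Proof. destruct a; reflexivity. Qed.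

Lemma cv_const c : Un_cv (fun _ => c) c.
Proof. intros e He; exists 0%nat; intros; unfold R_dist; rewrite Rminus_diag, Rabs_R0; lra. Qed.
Lemma cv_scal c u l : Un_cv u l -> Un_cv (fun n => c * u n) (c * l).
Proof. intros H. apply CV_mult; auto. apply cv_const. Qed.

Lemma prodD_zero D g d0 : (d0 < D)%nat -> g d0 = 0 -> prodD D g = 0.
Proof. revert g d0; induction D; intros g d0 Hd H; [lia|]. rewrite prodD_S.
  destruct d0. rewrite H; ring. rewrite (IHD (fun d => g (S d)) d0); [ring|lia|auto]. Qed.

Lemma list_diff (l1 l2 : list nat) : length l1 = length l2 -> l1 <> l2 ->
  exists d, (d < length l1)%nat /\ nth d l1 0%nat <> nth d l2 0%nat.
Proof. revert l2; induction l1; intros [|b l2] Hl Hne; simpl in *; try lia; [congruence|].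
  destruct (Nat.eq_dec a b) as [->|Hab].
  - destruct (IHl1 l2) as [d [H1 H2]]; try lia. congruence. exists (S d); split; auto; lia.
  - exists 0%nat; split; auto; lia. Qed.

Lemma prodD_delta D (i1 i2 j1 j2 : list nat) : length i1 = D -> length i2 = D -> length j1 = D -> length j2 = D ->
  prodD D (fun d => if (Nat.eqb (nth d i1 0%nat) (nth d i2 0%nat) && Nat.eqb (nth d j1 0%nat) (nth d j2 0%nat))%bool then 1 else 0)
  = if idx_eq_dec (i1, j1) (i2, j2) then 1 else 0.
Proof. intros H1 H2 H3 H4. destruct (idx_eq_dec (i1, j1) (i2, j2)) as [E|E].
  - injection E; intros -> ->. rewrite (prodD_ext _ _ (fun _ => 1)). rewrite prodD_const, pow1; auto.
    intros; rewrite !Nat.eqb_refl; reflexivity.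
  - destruct (list_eq_dec Nat.eq_dec i1 i2) as [->|Hi].
    + assert (j1 <> j2) by congruence. destruct (list_diff j1 j2) as [d [Hd Hn]]; try congruence.
      apply (prodD_zero _ _ d). lia. apply Nat.eqb_neq in Hn. rewrite Hn, Bool.andb_false_r. reflexivity.
    + destruct (list_diff i1 i2) as [d [Hd Hn]]; try congruence.
      apply (prodD_zero _ _ d). lia. apply Nat.eqb_neq in Hn. rewrite Hn. reflexivity.
Qed.

Lemma basis_spec D N Q a : In a (basis_idx D N Q) ->
  In (fst a) (tuples D N) /\ In (snd a) (tuples D (S Q)) /\ (sumn_list (snd a) <= Q)%nat.
Proof. destruct a as [i j]. unfold basis_idx. rewrite in_prod_iff. intros [Hi Hj].
  apply filter_In in Hj as [Hj Hs]. apply Nat.leb_le in Hs. auto. Qed.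

Lemma gram_lim D N Q a b : (0 < N)%nat -> In a (basis_idx D N Q) -> In b (basis_idx D N Q) ->
  Un_cv (fun M => riemann_sum D (S M) (fun x => eta D N a x * eta D N b x))
    (if idx_eq_dec a b then 1 else 0).
Proof. intros HN Ha Hb.
  destruct (basis_spec _ _ _ _ Ha) as [Ha1 [Ha2 _]]. destruct (basis_spec _ _ _ _ Hb) as [Hb1 [Hb2 _]].
  destruct (tuples_spec _ _ _ Ha1) as [La1 Na1]. destruct (tuples_spec _ _ _ Ha2) as [La2 _].
  destruct (tuples_spec _ _ _ Hb1) as [Lb1 Nb1]. destruct (tuples_spec _ _ _ Hb2) as [Lb2 _].
  eapply Un_cv_ext with (fun M => prodD D (fun d => / INR (S M) * sumL (seq 0 (S M))
     (fun k => INR N * (ef N (nth d (fst a) 0%nat) (nth d (snd a) 0%nat) (INR (S k) / INR (S M)) *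
                         ef N (nth d (fst b) 0%nat) (nth d (snd b) 0%nat) (INR (S k) / INR (S M)))))).
  - intros M. rewrite RS_def. rewrite prodD_mult, prodD_const.
    f_equal.
    rewrite <- (sumL_tuples_prod D (S M) (fun d kk => INR N * (ef N (nth d (fst a) 0%nat) (nth d (snd a) 0%nat) (INR (S kk) / INR (S M)) *
                         ef N (nth d (fst b) 0%nat) (nth d (snd b) 0%nat) (INR (S kk) / INR (S M))))).
    apply sumL_ext; intros k Hk.
    rewrite !eta_ef.
    transitivity (sqrt (INR N ^ D) * sqrt (INR N ^ D) *
      (prodD D (fun d => ef N (nth d (fst a) 0%nat) (nth d (snd a) 0%nat) (tag D (S M) k d)) *
       prodD D (fun d => ef N (nth d (fst b) 0%nat) (nth d (snd b) 0%nat) (tag D (S M) k d)))).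
    2: ring.
    rewrite sqrt_sqrt by (apply pow_le, pos_INR).
    rewrite <- prodD_const, <- !prodD_mult. apply prodD_ext. intros d Hd.
    unfold tag. destruct (Nat.ltb_spec d D); [|lia]. reflexivity.
  - destruct a as [i1 j1], b as [i2 j2]. simpl fst in *; simpl snd in *.
    rewrite <- (prodD_delta D i1 i2 j1 j2) by auto. apply prodD_cv. intros d Hd. apply ef_lim; auto.
Qed.

Lemma sumL_mult_r {A} (l : list A) g c : sumL l g * c = sumL l (fun x => g x * c).
Proof. rewrite Rmult_comm, <- sumL_scal. apply sumL_ext; intros; ring. Qed.

Lemma sumL_pos {A} (l : list A) g a : (forall x, In x l -> 0 <= g x) -> In a l -> 0 < g a -> 0 < sumL l g.
Proof. induction l; intros H Ha Hg; [destruct Ha|]. rewrite sumL_cons.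
  destruct Ha as [->|Ha].
  - assert (0 <= sumL l g) by (apply sumL_nonneg; intros; apply H; simpl; auto). lra.
  - assert (0 <= g a0) by (apply H; simpl; auto). assert (0 < sumL l g) by (apply IHl; auto; intros; apply H; simpl; auto). lra.
Qed.

Lemma sumL_delta (l : list (list nat * list nat)) g a : NoDup l -> In a l ->
  sumL l (fun b => g b * (if idx_eq_dec a b then 1 else 0)) = g a.
Proof. induction l; intros Hnd Ha; [destruct Ha|]. inversion Hnd; subst. rewrite sumL_cons.
  destruct Ha as [->|Ha].
  - destruct (idx_eq_dec a a) as [_|]; [|congruence].
    rewrite (sumL_ext _ _ (fun _ => 0)). rewrite sumL_zero; ring.
    intros x Hx. destruct (idx_eq_dec a x) as [->|]; [contradiction|ring].
  - destruct (idx_eq_dec a a0) as [->|]; [contradiction|]. rewrite IHl; auto. ring.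
Qed.

Lemma NoDup_basis D N Q : NoDup (basis_idx D N Q).
Proof. unfold basis_idx. apply NoDup_list_prod'. apply NoDup_tuples. apply NoDup_filter, NoDup_tuples. Qed.

Lemma RS_scal D M c F : riemann_sum D M (fun x => c * F x) = c * riemann_sum D M F.
Proof. rewrite !RS_def, sumL_scal. ring. Qed.

Lemma eig_bound D N Q (f : (nat -> R) -> R) fl fu Rm lam (v : list nat * list nat -> R) :
  (1 <= N)%nat -> (forall x, in_cube D x -> fl <= f x <= fu) ->
  (forall a b, In a (basis_idx D N Q) -> In b (basis_idx D N Q) ->
     is_cube_integral D (fun x => eta D N a x * eta D N b x * f x) (Rm a b)) ->
  (exists a, In a (basis_idx D N Q) /\ v a <> 0) ->
  (forall a, In a (basis_idx D N Q) ->
     sumL (basis_idx D N Q) (fun b => Rm a b * v b) = lam * v a) ->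
  fl <= lam <= fu.
Proof. intros HN Hf HR [a0 [Ha0 Hv0]] Heig.
  set (B := basis_idx D N Q) in *.
  set (S2 := sumL B (fun a => v a * v a)).
  assert (HS2 : 0 < S2).
  { apply (sumL_pos _ _ a0); auto. intros; apply Rle_0_sqr. destruct (Rlt_dec 0 (v a0)); nra. }
  set (W := fun x => sumL B (fun a => v a * eta D N a x)).
  assert (EW : forall (g : (nat -> R) -> R) x, W x * W x * g x =
     sumL B (fun a => v a * sumL B (fun b => v b * (eta D N a x * eta D N b x * g x)))).
  { intros g x. unfold W. rewrite Rmult_assoc.
    rewrite (sumL_mult_r B (fun a => v a * eta D N a x)). apply sumL_ext; intros a _.
    rewrite (sumL_mult_r B (fun b => v b * eta D N b x)).
    rewrite <- !sumL_scal. apply sumL_ext; intros b _. ring. }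
  assert (C1 : Un_cv (fun M => riemann_sum D (S M) (fun x => W x * W x * f x)) (lam * S2)).
  { eapply Un_cv_ext. intros M. symmetry. rewrite (RS_ext _ _ _ _ (EW f)). rewrite RS_lin. 
    apply sumL_ext; intros a _. rewrite RS_lin. reflexivity.
    replace (lam * S2) with (sumL B (fun a => v a * sumL B (fun b => v b * Rm a b))).
    - apply sumL_cv; intros a Ha. apply cv_scal. apply sumL_cv; intros b Hb. apply cv_scal.
      apply HR; auto.
    - unfold S2. rewrite <- sumL_scal. apply sumL_ext; intros a Ha.
      rewrite (sumL_ext _ _ (fun b => Rm a b * v b)) by (intros; ring). rewrite Heig by auto. ring. }
  assert (C2 : Un_cv (fun M => riemann_sum D (S M) (fun x => W x * W x * 1)) S2).
  { eapply Un_cv_ext. intros M. symmetry. rewrite (RS_ext _ _ _ _ (EW (fun _ => 1))). rewrite RS_lin.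
    apply sumL_ext; intros a _. rewrite RS_lin. reflexivity.
    replace S2 with (sumL B (fun a => v a * sumL B (fun b => v b * (if idx_eq_dec a b then 1 else 0)))).
    - apply sumL_cv; intros a Ha. apply cv_scal. apply sumL_cv; intros b Hb. apply cv_scal.
      eapply Un_cv_ext; [|apply (gram_lim D N Q a b)]; auto; try lia.
      intros M. apply RS_ext. intros; ring.
    - unfold S2. apply sumL_ext; intros a Ha. rewrite sumL_delta; auto. apply NoDup_basis. }
  assert (L1 : fl * S2 <= lam * S2).
  { apply (Rle_cv_lim (Un := fun M => fl * riemann_sum D (S M) (fun x => W x * W x * 1))
       (Vn := fun M => riemann_sum D (S M) (fun x => W x * W x * f x))); auto. 2: apply cv_scal; auto.
    intros M. rewrite <- RS_scal. apply RS_mono. intros k Hk.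
    pose proof (Hf _ (tag_cube D M k Hk)). pose proof (Rle_0_sqr (W (tag D (S M) k))).
    unfold Rsqr in *. nra. }
  assert (L2 : lam * S2 <= fu * S2).
  { apply (Rle_cv_lim (Un := fun M => riemann_sum D (S M) (fun x => W x * W x * f x))
       (Vn := fun M => fu * riemann_sum D (S M) (fun x => W x * W x * 1))); auto. 2: apply cv_scal; auto.
    intros M. rewrite <- RS_scal. apply RS_mono. intros k Hk.
    pose proof (Hf _ (tag_cube D M k Hk)). pose proof (Rle_0_sqr (W (tag D (S M) k))).
    unfold Rsqr in *. nra. }
  split; nra.
Qed.

Lemma exp_le_mono a b : a <= b -> exp a <= exp b.
Proof. intros [H|H]; [left; apply exp_increasing; auto|rewrite H; lra]. Qed.

Lemma ind_sum N n y : (0 < N)%nat ->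
  sumL (seq 0 n) (fun k => ind_oc (INR k / INR N) (INR (S k) / INR N) y) <= 1 /\
  (INR n / INR N < y -> sumL (seq 0 n) (fun k => ind_oc (INR k / INR N) (INR (S k) / INR N) y) = 0).
Proof. intros HN. assert (HNp : 0 < INR N) by (apply lt_0_INR; lia).
  assert (Hmono : INR n / INR N <= INR (S n) / INR N).
  { apply Rmult_le_compat_r. left; apply Rinv_0_lt_compat; lra. apply le_INR; lia. }
  induction n.
  - simpl. unfold sumL; simpl. split; [lra|auto].
  - assert (Hm : INR n / INR N <= INR (S n) / INR N).
    { apply Rmult_le_compat_r. left; apply Rinv_0_lt_compat; lra. apply le_INR; lia. }
    destruct (IHn Hm) as [I1 I2].
    rewrite seq_S, sumL_app, sumL_cons, sumL_nil. simpl (0 + n)%nat.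
    unfold ind_oc at 2 4.
    destruct (Rlt_dec (INR n / INR N) y); [destruct (Rle_dec y (INR (S n) / INR N))|].
    + rewrite I2 by auto. split; [lra|intros; lra].
    + split; [lra|]. intros. rewrite I2 by lra. lra.
    + split; [lra|]. intros. lra.
Qed.

Lemma ef_sq_le N k j y : (0 < N)%nat ->
  (ef N k j y) ^ 2 <= (2 * INR j + 1) * ind_oc (INR k / INR N) (INR (S k) / INR N) y.
Proof. intros HN. assert (HNp : 0 < INR N) by (apply lt_0_INR; lia).
  pose proof (pos_INR j).
  unfold ef, ind_oc.
  destruct (Rlt_dec (INR k / INR N) y); [destruct (Rle_dec y (INR (S k) / INR N))|].
  - assert (Hb : (legendre j (2 * (INR N * y - INR k) - 1)) ^ 2 <= 1).
    { apply leg_bound. rewrite S_INR in r0.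
      assert (INR k < INR N * y).
      { apply Rmult_lt_compat_l with (r := INR N) in r; auto. unfold Rdiv in r.
        rewrite Rmult_comm, Rmult_assoc, Rinv_l, Rmult_1_r in r; lra. }
      assert (INR N * y <= INR k + 1).
      { apply Rmult_le_compat_l with (r := INR N) in r0; [|lra]. unfold Rdiv in r0.
        rewrite (Rmult_comm (INR k + 1)), <- Rmult_assoc, Rinv_r, Rmult_1_l in r0; lra. }
      lra. }
    replace ((sqrt (2 * INR j + 1) * legendre j (2 * (INR N * y - INR k) - 1) * 1) ^ 2) with
      ((sqrt (2 * INR j + 1) * sqrt (2 * INR j + 1)) * (legendre j (2 * (INR N * y - INR k) - 1)) ^ 2) by ring.
    rewrite sqrt_sqrt by lra. nra.
  - rewrite Rmult_0_r. simpl. lra.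
  - rewrite Rmult_0_r. simpl. lra.
Qed.

Lemma prod_exp j : prodD (length j) (fun d => 2 * INR (nth d j 0%nat) + 1) <= exp (2 * INR (sumn_list j)).
Proof. induction j.
  - simpl. unfold prodD; simpl. rewrite Rmult_0_r, exp_0. lra.
  - simpl length. rewrite prodD_S. simpl nth. change (sumn_list (a :: j)) with (a + sumn_list j)%nat.
    rewrite plus_INR, Rmult_plus_distr_l, exp_plus.
    pose proof (pos_INR a). apply Rmult_le_compat; try lra.
    apply prodD_nonneg. intros; pose proof (pos_INR (nth d j 0%nat)); lra.
    pose proof (exp_ineq1_le (2 * INR a)). lra.
Qed.

Lemma sup_bound D N Q x : (1 <= N)%nat -> in_cube D x ->
  sumL (basis_idx D N Q) (fun a => (eta D N a x) ^ 2) <= INR N ^ D * exp (2 * INR Q) * C (D + Q) D.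
Proof. intros HN Hx. assert (HN0 : (0 < N)%nat) by lia.
  set (TJ := filter (fun j => Nat.leb (sumn_list j) Q) (tuples D (S Q))).
  unfold basis_idx. fold TJ. rewrite sumL_list_prod, sumL_swap.
  assert (HC : INR (length TJ) = C (D + Q) D).
  { rewrite <- (count_tuples D (S Q) Q) by lia. rewrite <- sumL_filter. fold TJ.
    rewrite sumL_const. ring. }
  apply Rle_trans with (sumL TJ (fun _ => INR N ^ D * exp (2 * INR Q))).
  2:{ rewrite sumL_const, HC. lra. }
  apply sumL_le. intros j Hj.
  unfold TJ in Hj. apply filter_In in Hj as [Hj Hs]. apply Nat.leb_le in Hs.
  destruct (tuples_spec _ _ _ Hj) as [Lj _].
  rewrite (sumL_ext _ _ (fun i => INR N ^ D * prodD D (fun d => (ef N (nth d i 0%nat) (nth d j 0%nat) (x d)) ^ 2))).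
  2:{ intros i _. rewrite eta_ef. simpl fst; simpl snd.
      rewrite Rpow_mult_distr. set (P := prodD D (fun d => ef N (nth d i 0%nat) (nth d j 0%nat) (x d))).
      replace (sqrt (INR N ^ D) ^ 2 * P ^ 2) with ((sqrt (INR N ^ D) * sqrt (INR N ^ D)) * (P * P)) by ring.
      rewrite sqrt_sqrt by (apply pow_le, pos_INR). unfold P. rewrite <- prodD_mult.
      f_equal. apply prodD_ext; intros; ring. }
  rewrite sumL_scal. apply Rmult_le_compat_l. apply pow_le, pos_INR.
  rewrite (sumL_tuples_prod D N (fun d k => (ef N k (nth d j 0%nat) (x d)) ^ 2)).
  apply Rle_trans with (prodD D (fun d => 2 * INR (nth d j 0%nat) + 1)).
  - apply prodD_le. intros d Hd. split.
    + apply sumL_nonneg; intros; apply pow2_ge_0.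
    + apply Rle_trans with (sumL (seq 0 N) (fun k => (2 * INR (nth d j 0%nat) + 1) *
         ind_oc (INR k / INR N) (INR (S k) / INR N) (x d))).
      * apply sumL_le; intros; apply ef_sq_le; auto.
      * rewrite sumL_scal. destruct (ind_sum N N (x d) HN0) as [I1 _].
        pose proof (pos_INR (nth d j 0%nat)).
        assert (0 <= sumL (seq 0 N) (fun k => ind_oc (INR k / INR N) (INR (S k) / INR N) (x d))).
        { apply sumL_nonneg; intros; unfold ind_oc; destruct Rlt_dec; [destruct Rle_dec|]; lra. }
        nra.
  - rewrite <- Lj. eapply Rle_trans; [apply prod_exp|]. apply exp_le_mono.
    apply Rmult_le_compat_l; [lra|]. apply le_INR; auto.
Qed.

Theorem mainTheorem6
  (D N Q : nat) (f : (nat -> R) -> R) (fl fu w : R)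
  (Rm : list nat * list nat -> list nat * list nat -> R) :
  (1 <= D)%nat -> (1 <= N)%nat ->
  continuous_on_cube D f ->
  (forall x, in_cube D x -> 0 < f x) ->
  is_cube_integral D f 1 ->
  (* fl = f_* = inf f,  fu = f^* = sup f over [0,1]^D *)
  is_lub (fun y => exists x, in_cube D x /\ y = - f x) (- fl) ->
  is_lub (fun y => exists x, in_cube D x /\ y = f x) fu ->
  (* w = varpi(1/N) *)
  is_lub (fun y => exists x z, in_cube D x /\ in_cube D z /\
            (forall d, (d < D)%nat -> Rabs (x d - z d) <= / INR N) /\
            y = Rabs (f x - f z)) w ->
  (* R = E[eta(X) eta(X)^T] *)
  (forall a b, In a (basis_idx D N Q) -> In b (basis_idx D N Q) ->
     is_cube_integral D (fun x => eta D N a x * eta D N b x * f x) (Rm a b)) ->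
  (Q = 0%nat \/ 2 * C (D + Q) D * exp (2 * INR Q) * w <= fl) ->
  (forall (lam : R) (v : list nat * list nat -> R),
     (exists a, In a (basis_idx D N Q) /\ v a <> 0) ->
     (forall a, In a (basis_idx D N Q) ->
        sumL (basis_idx D N Q) (fun b => Rm a b * v b) = lam * v a) ->
     fl / 2 <= lam /\ lam <= 3 / 2 * fu) /\
  (forall x, in_cube D x ->
     sumL (basis_idx D N Q) (fun a => (eta D N a x) ^ 2)
       <= INR N ^ D * exp (2 * INR Q) * C (D + Q) D).
Proof.
  intros HD HN _ Hpos _ [Hl1 Hl2] [Hu1 Hu2] _ HR _. split.
  - intros lam v Hv Heig.
    assert (Hf : forall x, in_cube D x -> fl <= f x <= fu).
    { intros x Hx. split.
      - assert (- f x <= - fl) by (apply Hl1; exists x; auto). lra.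
      - apply Hu1; exists x; auto. }
    assert (Hfl : 0 <= fl).
    { assert (- fl <= 0). apply Hl2. intros y [x [Hx ->]]. specialize (Hpos x Hx). lra. lra. }
    assert (Hfu : 0 <= fu).
    { assert (Hc : in_cube D (fun _ => 0)) by (split; intros; lra).
      specialize (Hpos _ Hc). assert (f (fun _ => 0) <= fu) by (apply Hu1; exists (fun _ => 0); auto). lra. }
    destruct (eig_bound D N Q f fl fu Rm lam v HN Hf HR Hv Heig). split; lra.
  - intros x Hx. apply sup_bound; auto.
Qed.
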